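(* Let $D$ and $m$ be positive integers, $G$ a connected graph of maximum degree at most $D$, and $S_1,\dots,S_m$ pairwise disjoint subsets of $V(G)$, each of size at least $2+(D-1)(m-1)$. Then there exist pairwise vertex-disjoint paths $P_1,\dots,P_m$ in $G$ such that for each $1\le i\le m$, $P_i$ has two distinct endpoints, both belonging to $S_i$. *)

(* Defs.v *)
From mathcomp Require Import all_boot.
Set Implicit Arguments. Unset Strict Implicit. Unset Printing Implicit Defensive.

Definition simple_graph (T : finType) (e : rel T) : Prop :=
  symmetric e /\ irreflexive e.

Definition graph_connected (T : finType) (e : rel T) : Prop :=
  forall x y : T, connect e x y.

Definition max_degree_le (T : finType) (e : rel T) (D : nat) : Prop :=
  forall x : T, #|[set y | e x y]| <= D.

Definition gpath (T : finType) (e : rel T) (p : seq T) : bool :=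
  if p is x :: q then path e x q && uniq p else false.

Definition ends_in (T : finType) (p : seq T) (S : {set T}) : Prop :=
  exists x q, p = x :: q /\ x \in S /\ last x q \in S /\ x != last x q.

(* Main.v *)
Require Import Defs.
From mathcomp Require Import all_boot.
From mathcomp Require Import zify.

Set Implicit Arguments. Unset Strict Implicit. Unset Printing Implicit Defensive.

Lemma ar1 D y a b : D - 1 <= y -> 2 + y <= a -> a <= b -> b <= D -> False.
Proof. lia. Qed.
Lemma ar2 D y a b c : 2 + (y + (D - 1)) <= a + c -> a <= b -> b <= D - 1 -> 2 + y <= c.
Proof. lia. Qed.
Lemma ar3 a b : a < b -> a <= b - 1.
Proof. lia. Qed.

Lemma ar0 y a : 2 + y <= a -> 1 < a.
Proof. lia. Qed.
Lemma ar4 y a : 2 + y <= a -> 0 < a.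
Proof. lia. Qed.
Lemma ar5 x y : x < 1 -> y < 1 -> x = y.
Proof. lia. Qed.

Section G.
Variables (T : finType) (e : rel T).
Hypothesis esym : symmetric e.
Hypothesis eirr : irreflexive e.

Definition rlt (B : {set T}) : rel T := fun x y => [&& x \in B, y \in B & e x y].
Definition connb (B : {set T}) : bool :=
  [forall (x | x \in B), [forall (y | y \in B), connect (rlt B) x y]].
Definition comp (B : {set T}) (w : T) : {set T} := [set y in B | connect (rlt B) w y].

Lemma disjP (A B : {pred T}) : (forall x, x \in A -> x \in B -> False) -> [disjoint A & B].
Proof. move=> H; rewrite disjoint_subset; apply/subsetP => x xA; rewrite inE; apply/negP => xB; exact: H x xA xB. Qed.

Lemma connbP (B : {set T}) : reflect (forall x y, x \in B -> y \in B -> connect (rlt B) x y) (connb B).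
Proof.
apply: (iffP forall_inP) => [H x y xB yB | H x xB]; last by apply/forall_inP => y yB; apply: H.
by move/forall_inP: (H x xB); apply.
Qed.

Lemma rlt_sym (B : {set T}) : symmetric (rlt B).
Proof. by move=> x y; rewrite /rlt esym; case: (x \in B); case: (y \in B). Qed.

Lemma csym (B : {set T}) x y : connect (rlt B) x y = connect (rlt B) y x.
Proof. exact: (sym_connect_sym (rlt_sym B)). Qed.

Lemma cmono (B B' : {set T}) x y : B \subset B' -> connect (rlt B) x y -> connect (rlt B') x y.
Proof.
move=> sub /connectP [p pth ->]; apply/connectP; exists p => //.
apply: sub_path pth => a b /and3P[aB bB eab]; by rewrite /rlt (subsetP sub a aB) (subsetP sub b bB).
Qed.

Lemma path_sub (B : {set T}) a p : path (rlt B) a p -> {subset p <= B}.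
Proof.
elim: p a => //= y p IH a /andP[/and3P[_ yB _] pth] z; rewrite inE => /orP[/eqP->//|].
exact: IH pth z.
Qed.

Lemma crossing (r : rel T) (X : {set T}) a b : connect r a b -> a \in X -> b \notin X ->
  exists x y, [/\ x \in X, y \notin X & r x y].
Proof.
move/connectP=> [p pth ->]; elim: p a pth => /= [a _ aX|y p IH a /andP[ray pth] aX bX].
  by rewrite aX.
case yX: (y \in X); first exact: IH pth yX bX.
by exists a, y; rewrite yX.
Qed.

Lemma conn_comp (B : {set T}) w x : connect (rlt B) w x -> connect (rlt (comp B w)) w x.
Proof.
move=> cwx.
suff H : forall p z, connect (rlt B) w z -> path (rlt B) z p ->
  connect (rlt (comp B w)) z (last z p).
  by move/connectP: cwx => [p pth ->]; apply: H => //; exact: connect0.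
elim=> [|y p IH] z cwz /=; first by move=> _; exact: connect0.
move=> /andP[rzy pth].
have cwy : connect (rlt B) w y by apply: connect_trans cwz (connect1 rzy).
apply: connect_trans (IH y cwy pth); apply: connect1.
move/and3P: rzy => [zB yB ezy]; by rewrite /rlt !inE zB yB cwz cwy ezy.
Qed.

Lemma nbr_comp (C : {set T}) v x : connb C -> v \in C -> x \in C -> x != v ->
  exists2 w, w \in [set w in C :\ v | e v w] & connect (rlt (C :\ v)) w x.
Proof.
move=> /connbP Cc vC xC xv.
have xZ : x \in comp (C :\ v) x by rewrite !inE xv xC connect0.
have vZ : v \notin comp (C :\ v) x by rewrite !inE eqxx.
have [y1 [y2 [y1Z y2Z ry]]] := crossing (Cc x v xC vC) xZ vZ.
move: ry; rewrite /rlt => /and3P[y1C y2C e12].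
move: (y1Z); rewrite !inE => /andP[/andP[y1v _] cxy1].
case: (eqVneq y2 v) => [y2v|y2v].
  exists y1; first by rewrite !inE y1v y1C -esym -y2v e12.
  by rewrite csym.
exfalso; move/negP: y2Z; apply; rewrite !inE y2v y2C /=.
apply: connect_trans cxy1 (connect1 _); by rewrite /rlt !inE y1v y1C y2v y2C e12.
Qed.

Lemma side_conn (A C : {set T}) v w : C \subset A -> connb C -> connb (A :\: C) -> v \in C ->
  (forall z, z \in A :\: C -> exists2 u, u \in A :\: C & e v u) ->
  w \in C :\ v -> connb (A :\: comp (C :\ v) w).
Proof.
move=> CA Cc ACc vC Hu wC.
set K := comp (C :\ v) w.
have KC : K \subset C :\ v by apply/subsetP => y; rewrite inE => /andP[].
have vK : v \in A :\: K.
  by rewrite inE (subsetP CA v vC) andbT; apply/negP => /(subsetP KC); rewrite !inE eqxx.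
suff H : forall z, z \in A :\: K -> connect (rlt (A :\: K)) z v.
  apply/connbP => x y xK yK; apply: connect_trans (H x xK) _; rewrite csym; exact: H.
move=> z zK; case zC: (z \in C).
  case: (eqVneq z v) => [->|zv]; first exact: connect0.
  have [w' w'N cw'z] := nbr_comp Cc vC zC zv.
  move: w'N; rewrite !inE => /andP[/andP[w'v w'C] evw'].
  set Z := comp (C :\ v) z.
  have czw' : connect (rlt (C :\ v)) z w' by rewrite csym.
  have ZK : Z \subset A :\: K.
    apply/subsetP => y yZ; have yZ' := yZ; rewrite !inE in yZ'; case/andP: yZ' => /andP[yv yC] czy.
    have zK' : z \notin K by move: zK; rewrite inE => /andP[].
    have yK : y \notin K.
      apply/negP; rewrite inE => /andP[_ cwy]; move/negP: zK'; apply.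
      rewrite inE !inE zv zC /=; apply: connect_trans cwy _; by rewrite csym.
    by rewrite inE yK (subsetP CA y yC).
  apply: connect_trans (cmono ZK (conn_comp czw')) (connect1 _).
  have w'Z : w' \in Z by rewrite !inE w'v w'C czw'.
  by rewrite /rlt vK (subsetP ZK w' w'Z) esym evw'.
have zAC : z \in A :\: C by move: zK; rewrite !inE zC => /andP[_ ->].
have [u uAC evu] := Hu z zAC.
have sub : A :\: C \subset A :\: K.
  apply/subsetP => y yAC; have := yAC; rewrite inE => /andP[yC yA].
  rewrite inE yA andbT; apply/negP => yK; have := subsetP KC y yK.
  by rewrite !inE (negbTE yC) andbF.
apply: connect_trans (cmono sub (connbP _ ACc z u zAC uAC)) (connect1 _).
by rewrite /rlt vK (subsetP sub u uAC) esym evu.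
Qed.


Lemma card_le1_eq (B : {set T}) x y : #|B| <= 1 -> x \in B -> y \in B -> x = y.
Proof.
move=> H xB yB; apply/eqP; apply: contraLR H => xy; rewrite -ltnNge.
have sub : [set x; y] \subset B by apply/subsetP => z; rewrite !inE => /orP[]/eqP->.
by apply: leq_trans (subset_leq_card sub); rewrite cards2 xy.
Qed.

Section Min.
Variables (n : nat) (S : 'I_n -> {set T}) (A : {set T}).
Definition valid (C : {set T}) :=
  [&& C \subset A, connb C, connb (A :\: C) & [exists k, 1 < #|S k :&: C|]].
Variable C : {set T}.
Hypothesis Cvalid : valid C.
Hypothesis Cmin : forall K, valid K -> #|C| <= #|K|.
Variable v : T.
Hypothesis vC : v \in C.
Hypothesis Hu : forall z, z \in A :\: C -> exists2 u, u \in A :\: C & e v u.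

Lemma comp_small w : w \in C :\ v -> forall k, #|S k :&: comp (C :\ v) w| <= 1.
Proof.
move=> wCv k; set K := comp (C :\ v) w.
have := Cvalid; move/and4P => [CA Cc ACc _].
have KC : K \subset C :\ v by apply/subsetP => y; rewrite inE => /andP[].
have KC' : K \subset C.
  by apply/subsetP => y /(subsetP KC); rewrite inE => /andP[].
have KA : K \subset A by apply: subset_trans KC' CA.
have Kc : connb K.
  have H : forall x, x \in K -> connect (rlt K) w x.
    by move=> x; rewrite inE => /andP[_ cwx]; exact: conn_comp.
  apply/connbP => x y xK yK; apply: connect_trans (H y yK); rewrite csym; exact: H.
have ltK : #|K| < #|C|.
  apply: proper_card; apply/properP; split => //; exists v => //.
  by apply/negP => /(subsetP KC); rewrite !inE eqxx.
have : ~~ valid K.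
  apply/negP => vK; have := Cmin vK; by rewrite leqNgt ltK.
rewrite /valid KA Kc (side_conn CA Cc ACc vC Hu wCv) /= => /existsPn/(_ k).
by rewrite -leqNgt.
Qed.

Lemma count_loss k : #|(S k :&: C) :\ v| <= #|[set w in C :\ v | e v w]|.
Proof.
have := Cvalid; move/and4P => [CA Cc ACc _].
set X := (S k :&: C) :\ v; set N := [set w in C :\ v | e v w].
pose f x := odflt v [pick w in N | connect (rlt (C :\ v)) w x].
have Hf : forall x, x \in X -> f x \in N /\ connect (rlt (C :\ v)) (f x) x.
  move=> x xX; have /andP[xv /andP[_ xC]] : (x != v) && ((x \in S k) && (x \in C)).
    by rewrite !inE in xX.
  rewrite /f.
  case: pickP => [w /andP[wN cwx] | none] /=; first by split.
  have [w wN cwx] := nbr_comp Cc vC xC xv.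
  by move: (none w); rewrite wN cwx.
have inj : {in X &, injective f}.
  move=> x y xX yX fxy.
  have [fN cfx] := Hf x xX; have [_ cfy] := Hf y yX; rewrite -fxy in cfy.
  have fCv : f x \in C :\ v by move: fN; rewrite inE => /andP[].
  apply: (card_le1_eq (comp_small fCv k)).
    move: xX; rewrite !inE => /andP[xv /andP[xS xC]]; by rewrite xS xv xC cfx.
  move: yX; rewrite !inE => /andP[yv /andP[yS yC]]; by rewrite yS yv yC cfy.
rewrite -(card_in_imset inj); apply: subset_leq_card.
by apply/subsetP => y /imsetP[x xX ->]; exact: (Hf x xX).1.
Qed.
End Min.


Lemma pathC (C : {set T}) (P : {set T}) a b : connb C -> a \in P :&: C -> b \in P :&: C -> a != b ->
  exists q, [/\ gpath e (a :: q), ends_in (a :: q) P & {subset a :: q <= C}].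
Proof.
move=> Cc; rewrite !inE => /andP[aS aC] /andP[bS bC] ab.
move/connectP: (connbP _ Cc a b aC bC) => [p pth bE].
move: bS ab; rewrite bE; case: (shortenP pth) => q qth quniq _ bS ab.
exists q; split.
- rewrite /gpath quniq andbT; apply: (sub_path _ qth) => x y /and3P[_ _ exy]; exact: exy.
- by exists a, q.
- move=> z; rewrite inE => /orP[/eqP->//|]; exact: path_sub qth z.
Qed.

Lemma main D : max_degree_le e D -> forall n (A : {set T}) (S : 'I_n -> {set T}),
  connb A -> (forall i j, i != j -> [disjoint S i & S j]) ->
  (forall i, 2 + (D - 1) * (n - 1) <= #|S i :&: A|) ->
  exists P : 'I_n -> seq T,
    (forall i, [/\ gpath e (P i), ends_in (P i) (S i) & {subset P i <= A}]) /\
    (forall i j, i != j -> [disjoint P i & P j]).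
Proof.
move=> HD; elim=> [|n IH] A S Ac Sdis Ssz.
  by exists (fun _ => [::]); split => [[]|[]].
have vA : valid S A A.
  rewrite /valid subxx Ac setDv /=; apply/andP; split.
    by apply/connbP => x y; rewrite inE.
  apply/existsP; exists ord0; exact: ar0 (Ssz ord0).
case: (arg_minnP (fun C : {set T} => #|C|) vA) => C vC Cmin.
have vC' := vC; move/and4P: vC' => [CA Cc ACc /existsP[k0 hk0]].
case: (posnP n) => [n0|npos].
  case/card_gt1P: hk0 => a [b [aS bS ab]].
  have [q [gq eq sq]] := pathC Cc aS bS ab.
  have allk : forall k : 'I_n.+1, k = k0.
    move=> k; apply: ord_inj; move: (ltn_ord k) (ltn_ord k0); move: (nat_of_ord k) (nat_of_ord k0) => x y; rewrite n0; exact: ar5.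
  exists (fun _ => a :: q); split.
    move=> k; rewrite (allk k); split => // z /sq; exact: (subsetP CA).
  by move=> k k'; rewrite (allk k) (allk k') eqxx.
pose k1 : 'I_n.+1 := ord0.
pose k2 : 'I_n.+1 := @Ordinal n.+1 1 npos.
have k12 : k1 != k2 by [].
have CnA : ~~ (A \subset C).
  apply/negP => AsC; have CA' : C = A by apply/eqP; rewrite eqEsubset CA AsC.
  have [v vS] : exists v, v \in S k1 :&: C.
    by apply/card_gt0P; rewrite CA'; exact: ar4 (Ssz k1).
  have vC1 : v \in C by move: vS; rewrite inE => /andP[].
  have vS1 : v \in S k1 by move: vS; rewrite inE => /andP[].
  have Hu : forall z, z \in A :\: C -> exists2 u, u \in A :\: C & e v u.
    by move=> z; rewrite CA' setDv inE.
  have := count_loss vC Cmin vC1 Hu k2.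
  have vS2 : (v \in S k2) = false by exact: disjointFr (Sdis k1 k2 k12) vS1.
  rewrite -[X in X <= _]add0n -[0]/(nat_of_bool false) -vS2.
  have -> : (v \in S k2) = (v \in S k2 :&: C) by rewrite inE vC1 andbT.
  rewrite -cardsD1 => H.
  have HN : #|[set w in C :\ v | e v w]| <= D.
    apply: leq_trans (HD v); apply: subset_leq_card; apply/subsetP => w.
    by rewrite !inE => /andP[_ ->].
  have := Ssz k2; rewrite -CA' (_ : n.+1 - 1 = n); last by rewrite subn1.
  have : (D - 1) <= (D - 1) * n by rewrite leq_pmulr.
  move=> h1 h2; exact: ar1 h1 h2 H HN.
case/subsetPn: CnA => a aA aC.
case/card_gt1P: (hk0) => c [_ [cS _ _]].
have cC : c \in C by move: cS; rewrite inE => /andP[].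
have [v [u [vC1 uC ru]]] := crossing (connbP _ Ac c a (subsetP CA c cC) aA) cC aC.
move: ru; rewrite /rlt => /and3P[vA' uA evu].
have uAC : u \in A :\: C by rewrite inE uC uA.
have Hu : forall z, z \in A :\: C -> exists2 u, u \in A :\: C & e v u.
  by move=> z _; exists u.
have [i hi hk] : exists2 i, 1 < #|S i :&: C| &
    (forall k, k != i -> v \in S k -> #|S k :&: C| <= 1).
  case: (pickP (fun j => (v \in S j) && (1 < #|S j :&: C|))) => [i /andP[vi hi] | none].
    exists i => // k ki vk; exfalso.
    have := disjointFr (Sdis i k _) vi; rewrite vk eq_sym => /(_ ki); done.
  exists k0 => // k _ vk; move: (none k); rewrite vk /= => /negbT; by rewrite -leqNgt.
set N := [set w in C :\ v | e v w].
case/card_gt1P: (hi) => a' [b' [aS' bS' ab']].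
have Npos : 0 < #|N|.
  have [x0 [x0S x0v]] : exists x0, x0 \in S i :&: C /\ x0 != v.
    case: (eqVneq a' v) => [av|av]; last by exists a'.
    by exists b'; split => //; rewrite -av eq_sym.
  have x0C : x0 \in C by move: x0S; rewrite inE => /andP[].
  have [w wN _] := nbr_comp Cc vC1 x0C x0v.
  by apply/card_gt0P; exists w.
have ND : #|N| <= D - 1.
  have : #|N| < D.
    apply: leq_trans (HD v); apply: proper_card; apply/properP; split.
      by apply/subsetP => w; rewrite !inE => /andP[_ ->].
    by exists u; rewrite !inE ?evu // (negbTE uC) andbF.
  exact: ar3.
have loss : forall k, k != i -> #|S k :&: C| <= #|N|.
  move=> k ki; case vk: (v \in S k).
    by apply: leq_trans (hk k ki vk) Npos.
  rewrite (cardsD1 v) inE vk /= add0n; have := count_loss vC Cmin vC1 Hu k; done.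
have split_card : forall k, #|S k :&: A| = #|S k :&: C| + #|S k :&: (A :\: C)|.
  move=> k; rewrite -(cardsID C (S k :&: A)); congr (_ + _); apply: eq_card => x;
  rewrite !inE; case xC: (x \in C); rewrite ?(subsetP CA x xC) ?andbT ?andbF //=.
have [P' [HP' P'dis]] : exists P' : 'I_n -> seq T,
    (forall j, [/\ gpath e (P' j), ends_in (P' j) (S (lift i j)) & {subset P' j <= A :\: C}]) /\
    (forall j j', j != j' -> [disjoint P' j & P' j']).
  apply: IH => //.
    by move=> j j' jj'; apply: Sdis; rewrite (inj_eq (@lift_inj _ i)).
  move=> j; have Sk := Ssz (lift i j); rewrite split_card in Sk.
  have Lk : #|S (lift i j) :&: C| <= #|N| by apply: loss; rewrite eq_sym neq_lift.
  have E : (D - 1) * n = (D - 1) * (n - 1) + (D - 1).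
    by rewrite -mulnSr (subn1 n) prednK.
  rewrite (_ : n.+1 - 1 = n) ?E in Sk; last by rewrite subn1.
  exact: ar2 Sk Lk ND.
have [q [gq eq sq]] := pathC Cc aS' bS' ab'.
exists (fun k => if unlift i k is Some j then P' j else a' :: q); split.
  move=> k; case: (unliftP i k) => [j ->|->]; rewrite ?liftK ?unlift_none.
    have [g en sub] := HP' j; split => // z /sub; rewrite inE => /andP[_ ->].
    done.
  by split => // z /sq; exact: (subsetP CA).
move=> k k' kk'; case: (unliftP i k) => [j Ek|Ek]; case: (unliftP i k') => [j' Ek'|Ek'];
  rewrite Ek Ek' ?liftK ?unlift_none in kk' *.
- by apply: P'dis; apply: contraNneq kk' => ->.
- apply: disjP => z zP zq; have [_ _ sub] := HP' j; have := sub z zP.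
  by rewrite inE (sq z zq).
- apply: disjP => z zq zP; have [_ _ sub] := HP' j'; have := sub z zP.
  by rewrite inE (sq z zq).
- by rewrite eqxx in kk'.
Qed.

End G.

Theorem lemma6p4 (D m : nat) (T : finType) (e : rel T) (S : 'I_m -> {set T}) :
  0 < D -> 0 < m ->
  simple_graph e -> graph_connected e -> max_degree_le e D ->
  (forall i j : 'I_m, i != j -> [disjoint S i & S j]) ->
  (forall i : 'I_m, 2 + (D - 1) * (m - 1) <= #|S i|) ->
  exists P : 'I_m -> seq T,
    (forall i : 'I_m, gpath e (P i) /\ ends_in (P i) (S i)) /\
    (forall i j : 'I_m, i != j -> [disjoint P i & P j]).
Proof.
move=> _ _ [esym _] Gc HD Sdis Ssz.
have Ac : connb e setT.
  apply/connbP => x y _ _.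
  have -> : connect (rlt e setT) x y = connect e x y.
    by apply: eq_connect => a b; rewrite /rlt !inE.
  exact: Gc.
have Ssz' : forall i, 2 + (D - 1) * (m - 1) <= #|S i :&: setT| by move=> i; rewrite setIT.
have [P [HP Pdis]] := @main T e esym D HD m setT S Ac Sdis Ssz'.
exists P; split => // i; by case: (HP i).
Qed.

Print Assumptions lemma6p4.
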